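(* Fix $s\in\mathbb{N}^+$. If $m$ is sufficiently large (depending on $s$), then for every graph $G$ and all positive integers $r_1,\dots,r_s$ the following holds for the tournament $T_G^\bigstar$: for every $i\in[s]$ there is a constant $a_i>0$ such that for all $x,y\in V(T_G^\bigstar)$, $$t_{x,y}(F_i^{\dagger\bullet\bullet},T_G^\bigstar)=\begin{cases}a_i,& \text{if } (x,y) \text{ or } (y,x) \text{ is an arc of } T_{i*k}[G] \text{ for some } k\in[r_i],\\ 0,&\text{otherwise.}\end{cases}$$ Equivalently, after deleting all-zero rows and columns, the matrix $\big(t_{x,y}(F_i^{\dagger\bullet\bullet},T_G^\bigstar)\big)_{x,y}$ equals $a_i$ times the adjacency matrix of $r_i$ disjoint copies of $G$.
   Context: All digraphs are finite and loopless; a tournament is a digraph in which every pair of distinct vertices is joined by exactly one arc. A homomorphism from a digraph $F$ to a digraph $H$ is a map $\varphi:V(F)\to V(H)$ with $(\varphi(u),\varphi(v))\in E(H)$ whenever $(u,v)\in E(F)$. For a digraph $F$ with two distinguished roots $z,w$ and vertices $x,y$ of $T$, $\hom_{x,y}(F,T)$ is the number of homomorphisms $\varphi:F\to T$ with $\varphi(z)=x,\varphi(w)=y$, and $t_{x,y}(F,T)=\hom_{x,y}(F,T)/|V(T)|^{|V(F)|-2}$. Construction of $F_i^{\bullet\bullet}$: fix $s$, a positive integer $m$, and a tournament $F_0$ on vertex set $[m]$ satisfying: (I) every vertex has out-degree and in-degree at most $2m/3$; (II) there are no disjoint $A_1,A_2\subseteq[m]$ with $|A_1|=|A_2|=\lceil\sqrt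 m\,\rceil$ such that $(a_1,a_2)$ is an arc for all $a_1\in A_1,a_2\in A_2$; (III) for every $S\subseteq[m]$ with $|S|\ge 2m/13-\sqrt m$, $F_0[S]$ contains a directed cycle. Let $k_1,\dots,k_s$ be integers in $(2m/3+2,\,5m/6)$ with $k_i>k_{i+1}+1$. $F_i^{\bullet\bullet}$ is the digraph on $[m]\cup\{z_i,w_i\}$ (roots $z_i,w_i$) whose arcs are the arcs of $F_0$, plus $z_i\to v$, $v\to w_i$ for $1\le v\le k_i$, plus $u\to z_i$, $w_i\to u$ for $k_i<u\le m$. The symmetrization $F_i^{\dagger\bullet\bullet}$ is obtained from two disjoint copies of $F_i^{\bullet\bullet}$, the ''left'' copy with roots $z^1,w^1$ and the ''right'' copy with roots $z^2,w^2$, by identifying $z^1$ with $w^2$ (root $z_i$) and $w^1$ with $z^2$ (root $w_i$). Construction of $T_G^\bigstar$: let $G$ be a graph on $[n]$ and $r_1,\dots,r_s\in\mathbb{N}^+$. For $i\in[s]$ the tournament $T_i$ is built as follows. (1) $T_0$ is the transitive tournament on $[n]$ with arcs $a\to b$ for $a<b$; $T_0[G]$ is its sub-digraph with arcs $(a,b)$, $a<b$, $ab\in E(G)$. Order the arcs of $T_0[G]$ by $(x,y)\succ(a,b)$ iff $x+y>a+b$, or $x+y=a+b$ and $x>a$. (2) For each arc $e=(a,b)$ of $T_0[G]$ attach a new copy of $F_i^{\dagger\bullet\bullet}$ with root $z_i$ identified with $a$ and root $w_i$ with $b$ (so in the left copy $\overleftarrow{F_i^e}$ the roots $z,w$ are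 $a,b$, and in the right copy $\overrightarrow{F_i^e}$ they are $b,a$). Let $V_e$ be the $2m$ non-root vertices of this copy and $V_0=\bigcup_e V_e$. (3) Add all arcs $x\to y$ with $x$ a non-root vertex of $\overleftarrow{F_i^e}$ and $y$ a non-root vertex of $\overrightarrow{F_i^e}$. (4) For each arc $e=(a,b)$ of $T_0[G]$ and each $x\in[n]\setminus\{a,b\}$, add arcs $x\to v$ for all $v\in V_e$. (5) For arcs $e_1\succ e_2$ of $T_0[G]$, add all arcs $x\to y$ with $x\in V_{e_1}$, $y\in V_{e_2}$. Then $T_G^\bigstar$ is the tournament formed by disjoint copies $T_{i*k}$ of $T_i$ for $i\in[s]$, $k\in[r_i]$, with all arcs $u\to v$ for $u\in V(T_{i_1*k_1})$, $v\in V(T_{i_2*k_2})$ whenever $i_1<i_2$, or $i_1=i_2$ and $k_1<k_2$. $T_{i*k}[G]$ denotes the copy of $T_0[G]$ in $T_{i*k}$. *)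

(* Defs.v *)
From mathcomp Require Import all_boot all_order all_algebra.
Set Implicit Arguments. Unset Strict Implicit. Unset Printing Implicit Defensive.
Import Order.TTheory GRing.Theory Num.Theory.

Definition hom_xy (FV TV : finType) (EF : rel FV) (ET : rel TV)
    (z w : FV) (x y : TV) : nat :=
  #|[set phi : {ffun FV -> TV} |
       [&& phi z == x, phi w == y &
           [forall u, forall v, EF u v ==> ET (phi u) (phi v)]]]|.

Definition t_xy (FV TV : finType) (EF : rel FV) (ET : rel TV)
    (z w : FV) (x y : TV) : rat :=
  ((hom_xy EF ET z w x y)%:R / (#|TV| ^ (#|FV| - 2))%:R)%R.

(* The tournament F_0 on [m] (vertex v of [m] is represented by the   *)
(* ordinal v-1 : 'I_m) and its conditions (I)-(III).                   *)

Definition is_tournament (T : finType) (E : rel T) : Prop :=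
  (forall x, ~~ E x x) /\
  (forall x y, x != y -> (E x y && ~~ E y x) || (E y x && ~~ E x y)).

Definition ceil_sqrt (m : nat) : nat :=
  let q := Nat.sqrt m in if q * q == m then q else q.+1.

Definition condI (m : nat) (F0 : rel 'I_m) : Prop :=
  forall v : 'I_m, 3 * #|[set u | F0 v u]| <= 2 * m /\
                   3 * #|[set u | F0 u v]| <= 2 * m.

Definition condII (m : nat) (F0 : rel 'I_m) : Prop :=
  ~ exists A1 A2 : {set 'I_m},
      [/\ [disjoint A1 & A2], #|A1| = ceil_sqrt m, #|A2| = ceil_sqrt m &
          forall a1 a2, a1 \in A1 -> a2 \in A2 -> F0 a1 a2].

Definition has_dicycle_in (m : nat) (F0 : rel 'I_m) (S : {set 'I_m}) : Prop :=
  exists c : seq 'I_m,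
    [/\ 0 < size c, uniq c, {subset c <= S} & cycle F0 c].

(* For naturals, |S| >= 2m/13 - sqrt m  <->  (2m - 13|S|)^2 <= 169 m
   (with truncated subtraction; both sides hold when 2m <= 13|S|). *)
Definition condIII (m : nat) (F0 : rel 'I_m) : Prop :=
  forall S : {set 'I_m}, (2 * m - 13 * #|S|) ^ 2 <= 169 * m ->
    has_dicycle_in F0 S.

Definition F0_good (m : nat) (F0 : rel 'I_m) : Prop :=
  [/\ 0 < m, is_tournament F0, condI F0, condII F0 & condIII F0].

(* k_1 > ... > k_s (with gaps), each in (2m/3 + 2, 5m/6); index i in [s]
   is represented by the ordinal i-1 : 'I_s. *)
Definition k_good (m s : nat) (k : 'I_s -> nat) : Prop :=
  (forall i, 2 * m + 6 < 3 * k i /\ 6 * k i < 5 * m) /\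
  (forall i j : 'I_s, (j : nat) = i.+1 -> k j + 1 < k i).

(* F_i^{dagger bullet bullet}.  Vertices:                               *)
(*   inl (false, v) : vertex v of the left copy of F_i^{..}             *)
(*   inl (true,  v) : vertex v of the right copy                        *)
(*   inr false      : root z_i  (= z^1 = w^2)                           *)
(*   inr true       : root w_i  (= w^1 = z^2)                           *)
(* So the z-root of copy c is inr c and its w-root is inr (~~ c).       *)
(* Non-root vertex v (ordinal) corresponds to v+1 in [m], hence         *)
(* "1 <= v+1 <= k" is "v < k".                                          *)

Definition FdagV (m : nat) : finType := ((bool * 'I_m) + bool)%type.

Definition Fdag_arc (m : nat) (F0 : rel 'I_m) (k : nat) : rel (FdagV m) :=
  fun x y =>
  match x, y with
  | inl (c, u), inl (c', v) => (c == c') && F0 u v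
  | inr r, inl (c, v) =>
      if r == c then (v < k)%N
      else (k <= v)%N
  | inl (c, v), inr r =>
      if r == c then (k <= v)%N
      else (v < k)%N
  | inr _, inr _ => false
  end.

Definition root_z (m : nat) : FdagV m := inr false.
Definition root_w (m : nat) : FdagV m := inr true.

(* The tournament T_i built from a graph G on [n] (vertex a of [n] is  *)
(* the ordinal a-1 : 'I_n).                                            *)

Definition simple_graph (n : nat) (G : rel 'I_n) : Prop :=
  (forall a, ~~ G a a) /\ (forall a b, G a b = G b a).

Definition Garc (n : nat) (G : rel 'I_n) (p : 'I_n * 'I_n) : bool :=
  (p.1 < p.2)%N && G p.1 p.2.

Definition GedgeT (n : nat) (G : rel 'I_n) : finType :=
  {p : 'I_n * 'I_n | Garc G p}.

(* Vertices of T_i: inl a for a in [n]; inr (e, c, v) the non-root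
   vertex inl (c, v) of the copy of F_i^{dagger..} attached to arc e. *)
Definition TV (n : nat) (G : rel 'I_n) (m : nat) : finType :=
  ('I_n + (GedgeT G * bool * 'I_m))%type.

Definition embed (n : nat) (G : rel 'I_n) (m : nat) (e : GedgeT G)
    (u : FdagV m) : TV G m :=
  match u with
  | inl (c, v) => inr (e, c, v)
  | inr false => inl (sval e).1
  | inr true => inl (sval e).2
  end.

Definition arc_succ (n : nat) (G : rel 'I_n) (e1 e2 : GedgeT G) : bool :=
  let: (x, y) := sval e1 in let: (a, b) := sval e2 in
  (a + b < x + y)%N || ((x + y == a + b) && (a < x)%N).

Definition Ti_arc (n : nat) (G : rel 'I_n) (m : nat) (F0 : rel 'I_m)
    (k : nat) : rel (TV G m) :=
  fun x y =>
  [||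
      match x, y with inl a, inl b => (a < b)%N | _, _ => false end,
      [exists e : GedgeT G, exists u : FdagV m, exists v : FdagV m,
         [&& embed e u == x, embed e v == y & Fdag_arc F0 k u v]],
      match x, y with
      | inr (e1, c1, _), inr (e2, c2, _) => [&& e1 == e2, ~~ c1 & c2]
      | _, _ => false end,
      match x, y with
      | inl a, inr (e, _, _) => (a != (sval e).1) && (a != (sval e).2)
      | _, _ => false end
    |
      match x, y with
      | inr (e1, _, _), inr (e2, _, _) => arc_succ e1 e2
      | _, _ => false end ].

Definition CopyT (s : nat) (r : 'I_s -> nat) : finType :=
  {i : 'I_s & 'I_(r i)}.

Definition copy_lt (s : nat) (r : 'I_s -> nat) (c1 c2 : CopyT r) : bool :=
  (tag c1 < tag c2)%N ||
  ((tag c1 == tag c2) && (val (tagged c1) < val (tagged c2))%N).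

Definition TstarV (s : nat) (r : 'I_s -> nat) (n : nat) (G : rel 'I_n)
    (m : nat) : finType := (CopyT r * TV G m)%type.

Definition Tstar_arc (s : nat) (r : 'I_s -> nat) (n : nat) (G : rel 'I_n)
    (m : nat) (F0 : rel 'I_m) (k : 'I_s -> nat) : rel (TstarV r G m) :=
  fun x y =>
  if x.1 == y.1 then @Ti_arc n G m F0 (k (tag x.1)) x.2 y.2
  else copy_lt x.1 y.1.

Definition in_TikG (s : nat) (r : 'I_s -> nat) (n : nat) (G : rel 'I_n)
    (m : nat) (i : 'I_s) (x y : TstarV r G m) : bool :=
  (x.1 == y.1) && (tag x.1 == i) &&
  match x.2, y.2 with
  | inl a, inl b => Garc G (a, b)
  | _, _ => false
  end.

(* Main.v *)
Require Import Defs.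
From mathcomp Require Import all_boot all_order all_algebra zify.
From Stdlib Require PeanoNat.
Set Implicit Arguments. Unset Strict Implicit. Unset Printing Implicit Defensive.


Lemma embed_inj (n : nat) (G : rel 'I_n) (m : nat) (e : GedgeT G) :
  injective (@embed n G m e).
Proof.
have hab : ((sval e).1 < (sval e).2)%N by case: e => -[a b] /= /andP[].
move=> [[c u]|[]] [[c' v]|[]] //=; try by move=> [-> ->].
- by move=> [h]; move: hab; rewrite h ltnn.
- by move=> [h]; move: hab; rewrite h ltnn.
Qed.

Lemma Fdag_irr (m : nat) (F0 : rel 'I_m) (K : nat) :
  (forall u, ~~ F0 u u) -> forall u, ~~ Fdag_arc F0 K u u.
Proof.
move=> hF [[c u]|r] /=; first by rewrite eqxx /= hF.
by [].
Qed.

Lemma ex2_embed (n : nat) (G : rel 'I_n) (m : nat) (F0 : rel 'I_m) (K : nat) x y :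
  [exists e : GedgeT G, exists u : FdagV m, exists v : FdagV m,
         [&& embed e u == x, embed e v == y & Fdag_arc F0 K u v]] ->
  exists e u v, [/\ embed e u = x, embed e v = y & Fdag_arc F0 K u v].
Proof.
by move=> /existsP[e /existsP[u /existsP[v /and3P[/eqP h1 /eqP h2 h3]]]]; exists e, u, v.
Qed.

Lemma Ti_irr (n : nat) (G : rel 'I_n) (m : nat) (F0 : rel 'I_m) (K : nat) :
  (forall u, ~~ F0 u u) -> forall x, ~~ @Ti_arc n G m F0 K x x.
Proof.
move=> hF x; apply/negP; rewrite /Ti_arc.
case/or4P.
- by case: x => // a; rewrite ltnn.
- move/ex2_embed=> [e [u [v [h1 h2 h3]]]].
  have huv : u = v by apply: (@embed_inj n G m e); rewrite h1 h2.
  by move: h3; rewrite huv (negbTE (Fdag_irr K hF v)).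
- by case: x => // -[[e c] v]; case: c; rewrite ?andbF.
- case/orP; first by case: x => // -[[e c] v].
  case: x => // -[[e c] v]; case: e => -[a b] hab; rewrite /arc_succ /=.
  by rewrite ltnn eqxx ltnn.
Qed.

Definition Eext (m : nat) (F0 : rel 'I_m) (K : nat) : rel (FdagV m) :=
  fun u v => Fdag_arc F0 K u v ||
    match u, v with
    | inl (false, _), inl (true, _) => true
    | inr false, inr true => true
    | _, _ => false end.

Lemma embed_nonroot (n : nat) (G : rel 'I_n) (m : nat) (e e' : GedgeT G)
   (u u' : FdagV m) c w :
  u' = inl (c, w) -> embed e' u' = embed e u -> e' = e /\ u' = u.
Proof.
move=> -> /=; case: u => [[c' w']|[]] //= [-> -> ->] //.
Qed.

Lemma ex2_embed_eq (n : nat) (G : rel 'I_n) (m : nat) (F0 : rel 'I_m) (K : nat)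
  (e : GedgeT G) (u v : FdagV m) :
  [exists e' : GedgeT G, exists u' : FdagV m, exists v' : FdagV m,
         [&& embed e' u' == embed e u, embed e' v' == embed e v & Fdag_arc F0 K u' v']]
  = Fdag_arc F0 K u v.
Proof.
apply/idP/idP; last first.
  by move=> h; apply/existsP; exists e; apply/existsP; exists u; apply/existsP; exists v;
     rewrite !eqxx h.
move/ex2_embed=> [e' [u' [v' [h1 h2 h3]]]].
case: u' h1 h3 => [[c w]|r] h1 h3.
  have [ee uu] := embed_nonroot (erefl _) h1.
  subst e' u; have vv := embed_inj h2; by subst v'.
case: v' h2 h3 => [[c w]|r'] h2 h3; last by [].
have [ee vv] := embed_nonroot (erefl _) h2.
subst e' v; have uu := embed_inj h1; by subst u.
Qed.

Lemma embed_arc (n : nat) (G : rel 'I_n) (m : nat) (F0 : rel 'I_m) (K : nat)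
  (e : GedgeT G) (u v : FdagV m) :
  @Ti_arc n G m F0 K (embed e u) (embed e v) = Eext F0 K u v.
Proof.
rewrite /Ti_arc ex2_embed_eq /Eext.
have hab : ((sval e).1 < (sval e).2)%N by case: e => -[a b] /= /andP[].
have hsucc : arc_succ e e = false.
  by case: e {hab} => -[a b] hab; rewrite /arc_succ /= ltnn eqxx ltnn.
case: u => [[c w]|[]]; case: v => [[c' w']|[]] /=;
  rewrite ?hsucc ?eqxx ?orbF ?orFb ?andbF //=.
- by case: c; case: c'; rewrite ?andbF ?andbT ?orbF ?orbT ?andbF.
- by case: c; rewrite orbF.
- by case: c; rewrite orbF.
- by rewrite orbF.
- by rewrite ltnn.
- by rewrite ltnNge (ltnW hab).
- by rewrite ltnn.
Qed.

Definition wgt (n : nat) (G : rel 'I_n) (e : GedgeT G) : nat :=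
  ((sval e).1 + (sval e).2) * n + (sval e).1.

Definition key (n : nat) (G : rel 'I_n) (e : GedgeT G) (c : bool) : nat :=
  2 * (3 * n * n - wgt e) + c.

Lemma wgt_lt (n : nat) (G : rel 'I_n) (e : GedgeT G) : wgt e < 3 * n * n.
Proof.
rewrite /wgt; case: e => -[a b] /= _.
have ha := ltn_ord a; have hb := ltn_ord b.
nia.
Qed.

Lemma wgt_inj (n : nat) (G : rel 'I_n) (e1 e2 : GedgeT G) : wgt e1 = wgt e2 -> e1 = e2.
Proof.
rewrite /wgt; case: e1 => -[a1 b1] h1; case: e2 => -[a2 b2] h2 /= h.
have ha1 := ltn_ord a1; have ha2 := ltn_ord a2.
have n0 : 0 < n by apply: leq_ltn_trans ha1.
have hd : (a1 + b1 : nat) = a2 + b2.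
{ have := congr1 (fun x => x %/ n) h; rewrite /= !divnMDl //.
  by rewrite (divn_small ha1) (divn_small ha2) !addn0. }
have hm : (a1 : nat) = a2.
{ by have := congr1 (fun x => x %% n) h; rewrite /= !modnMDl !modn_small. }
have ea : a1 = a2 by apply: val_inj.
have hb : (b1 : nat) = b2 by lia.
have eb : b1 = b2 by apply: val_inj.
move: h1 h2; rewrite -ea -eb => h1 h2; congr exist; apply: bool_irrelevance.
Qed.

Lemma arc_succ_wgt (n : nat) (G : rel 'I_n) (e1 e2 : GedgeT G) :
  arc_succ e1 e2 -> wgt e2 < wgt e1.
Proof.
rewrite /wgt /arc_succ; case: e1 => -[x y] h1; case: e2 => -[a b] h2 /=.
have hx := ltn_ord x; have ha := ltn_ord a.
case/orP => [h|/andP[/eqP h h']]; first nia.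
rewrite h; lia.
Qed.

Lemma key_inj (n : nat) (G : rel 'I_n) (e1 e2 : GedgeT G) c1 c2 :
  key e1 c1 = key e2 c2 -> e1 = e2 /\ c1 = c2.
Proof.
rewrite /key => h.
have w1 := wgt_lt e1; have w2 := wgt_lt e2.
have hc : c1 = c2.
  by move: h; case: c1; case: c2 => //= h; exfalso; lia.
subst c2; split => //; apply: wgt_inj; lia.
Qed.

Definition kap (n : nat) (G : rel 'I_n) (m : nat) (t : TV G m) : nat :=
  match t with inl _ => 0 | inr (e, c, _) => key e c end.

Lemma key_arc (n : nat) (G : rel 'I_n) (m : nat) (F0 : rel 'I_m) (K : nat)
  e1 c1 v1 e2 c2 v2 :
  @Ti_arc n G m F0 K (inr (e1, c1, v1)) (inr (e2, c2, v2)) ->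
  (e1 = e2 /\ c1 = c2) \/ key e1 c1 < key e2 c2.
Proof.
rewrite /Ti_arc /= => /orP[h|/orP[/and3P[/eqP-> h1 h2]|h]].
- have [e [u [v [hu hv hf]]]] := ex2_embed h.
  case: u hu hf => [[c w]|[]] //= [? ? ?]; subst.
  case: v hv => [[c' w']|[]] //= [? ? ?]; subst.
  by case/andP=> /eqP -> _; left.
- right; rewrite /key; move: h1 h2; case: c1; case: c2 => //= _ _; lia.
- right; have := arc_succ_wgt h; rewrite /key.
  have w1 := wgt_lt e1; have w2 := wgt_lt e2; case: c1; case: c2 => /=; lia.
Qed.

Lemma arc_to_inl (n : nat) (G : rel 'I_n) (m : nat) (F0 : rel 'I_m) (K : nat)
  e c v t0 :
  @Ti_arc n G m F0 K (inr (e, c, v)) (inl t0) -> exists r, inl t0 = @embed n G m e (inr r).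
Proof.
rewrite /Ti_arc /= orbF => /ex2_embed [e' [u [w [hu hw _]]]].
case: u hu => [[c' w']|[]] //= [? ? ?]; subst.
by case: w hw => [[c' w']|r] //= hw; exists r; rewrite -hw.
Qed.

Lemma mid_block (n : nat) (G : rel 'I_n) (m : nat) (F0 : rel 'I_m) (K : nat)
  e c v1 v2 t :
  @Ti_arc n G m F0 K t (inr (e, c, v1)) -> @Ti_arc n G m F0 K (inr (e, c, v2)) t ->
  exists u, t = embed e u /\ (forall c' w, u = inl (c', w) -> c' = c).
Proof.
case: t => [t0|[[e' c'] w]] h1 h2.
  by have [r ->] := arc_to_inl h2; exists (inr r).
have [[-> ->]|k1] := key_arc h1; first by exists (inl (c, w)); split => // ? ? [].
have [[-> ->]|k2] := key_arc h2; first by exists (inl (c', w)); split => // ? ? [].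
by exfalso; lia.
Qed.

Lemma card_ltk (m k : nat) : k <= m -> #|[set v : 'I_m | v < k]| = k.
Proof.
move=> hk.
have -> : [set v : 'I_m | v < k] = [set widen_ord hk i | i : 'I_k].
  apply/setP=> v; rewrite inE; apply/idP/imsetP.
    by move=> hv; exists (Ordinal hv) => //; apply: val_inj.
  by move=> [i _ ->] /=.
rewrite card_imset ?card_ord //.
by move=> i j /(congr1 val) /= h; apply: val_inj.
Qed.

Lemma card_gek (m k : nat) : k <= m -> #|[set v : 'I_m | k <= v]| = m - k.
Proof.
move=> hk; have := cardsC [set v : 'I_m | v < k]; rewrite card_ltk // card_ord.
have -> : ~: [set v : 'I_m | v < k] = [set v : 'I_m | k <= v].
  by apply/setP=> v; rewrite !inE -leqNgt.
lia.
Qed.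

Lemma sub_card (T : finType) (A : {set T}) s : s <= #|A| ->
  exists B : {set T}, B \subset A /\ #|B| = s.
Proof.
move=> hs; exists [set x in take s (enum A)]; split.
  by apply/subsetP=> x; rewrite inE => /mem_take; rewrite mem_enum.
rewrite cardsE; have /card_uniqP -> : uniq (take s (enum A)).
  by apply: take_uniq; apply: enum_uniq.
by rewrite size_takel // -cardE.
Qed.

Lemma inj_card (T1 T2 : finType) (D : {set T1}) (E : {set T2}) (f : T1 -> T2) :
  {in D &, injective f} -> (forall x, x \in D -> f x \in E) -> #|D| <= #|E|.
Proof.
move=> hf hE; rewrite -(card_in_imset hf); apply: subset_leq_card.
by apply/subsetP=> y /imsetP[x hx ->]; apply: hE.
Qed.

Lemma no_cycle_lt (T : eqType) (e : rel T) (f : T -> nat) (P : pred T) (c : seq T) :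
  {in P &, forall u v, e u v -> f u < f v} -> all P c -> 0 < size c -> ~~ cycle e c.
Proof.
move=> he hP; case: c hP => // x s hP _; apply/negP => hc.
have hc' : cycle (relpre f ltn) (x :: s) by apply: (sub_in_cycle _ hP hc) => u v hu hv /he; apply.
have htr : transitive (relpre f ltn) by move=> y a b /= h1 h2; apply: ltn_trans h1 h2.
have := order_path_min htr hc'; move/allP/(_ x); rewrite mem_rcons mem_head /= ltnn.
by move/(_ isT).
Qed.

Lemma inl_arc (n : nat) (G : rel 'I_n) (m : nat) (F0 : rel 'I_m) (K : nat) a b :
  @Ti_arc n G m F0 K (inl a) (inl b) -> a < b.
Proof.
rewrite /Ti_arc /= orbF => /orP[//|/ex2_embed [e [u [v [hu hv hf]]]]].
by case: u hu hf => [[c w]|r] //= _; case: v hv => [[c w]|r'] //=.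
Qed.

Definition decode (n : nat) (G : rel 'I_n) (m : nat) (e : GedgeT G) (t : TV G m) : FdagV m :=
  match t with
  | inl t0 => inr (t0 != (sval e).1)
  | inr (_, c, w) => inl (c, w)
  end.

Lemma decodeK (n : nat) (G : rel 'I_n) (m : nat) (e : GedgeT G) (u : FdagV m) :
  decode e (embed e u) = u.
Proof.
have hab : ((sval e).1 < (sval e).2)%N by case: e => -[a b] /= /andP[].
case: u => [[c w]|[]] //=; rewrite ?eqxx //.
by rewrite neq_ltn hab orbT.
Qed.


Lemma numeric (m P : nat) : 20 * 1000 <= m -> ~~ ((2 * m - 13 * P) ^ 2 <= 169 * m) ->
  6 * (P + 2 * ceil_sqrt m) < m + 12 /\ 0 < ceil_sqrt m.
Proof.
move=> hm hP.
have [hq1 hq2] := PeanoNat.Nat.sqrt_spec' m.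
set q := Nat.sqrt m in hq1 hq2 *.
have hs0 : ceil_sqrt m <= q + 1 /\ 0 < ceil_sqrt m.
  rewrite /ceil_sqrt -/q; case: eqP => h; last by lia.
  split; first by lia.
  by case: (q) h => //= h; lia.
move: hP; rewrite -ltnNge expnS expn1 => hP; clearbody q.
have h13 : 13 * q < 2 * m - 13 * P.
  rewrite ltnNge; apply/negP => h.
  have : (2 * m - 13 * P) * (2 * m - 13 * P) <= (13 * q) * (13 * q) by apply: leq_mul.
  lia.
have h78 : 78 * q <= m.
  case: (ltnP q 78) => h; first lia.
  have := leq_mul h (leqnn q); lia.
split; last by case: hs0.
lia.
Qed.

Definition inblk (n : nat) (G : rel 'I_n) (m : nat) (e : GedgeT G) (c : bool) (t : TV G m) :=
  exists u, t = embed e u /\ (forall c' w, u = inl (c', w) -> c' = c).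

Lemma tour_facts (m : nat) (F0 : rel 'I_m) : is_tournament F0 ->
  (forall u, ~~ F0 u u) /\ (forall u v, u != v -> F0 u v || F0 v u) /\
  (forall u v, F0 u v -> ~~ F0 v u).
Proof.
move=> [hirr htour]; split => //; split.
  by move=> u v /htour /orP[/andP[-> _]|/andP[-> _]]; rewrite ?orbT.
move=> u v huv; case: (eqVneq u v) => [e|ne]; first by subst; rewrite (negbTE (hirr v)) in huv.
by case/orP: (htour _ _ ne) => /andP[h1 h2]; [exact: h2 | by rewrite huv in h2].
Qed.

Lemma degs (m : nat) (F0 : rel 'I_m) : is_tournament F0 -> condI F0 -> forall u,
  m <= 3 * #|[set v | F0 u v]| + 3 /\ m <= 3 * #|[set v | F0 v u]| + 3.
Proof.
move=> ht hI u; have [hirr [htot _]] := tour_facts ht.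
have [h1 h2] := hI u.
have hc : m - 1 <= #|[set v | F0 u v]| + #|[set v | F0 v u]|.
  have := cardsC [set u]; rewrite cards1 card_ord => hC.
  have : ~: [set u] \subset [set v | F0 u v] :|: [set v | F0 v u].
    apply/subsetP=> v; rewrite !inE => hv; apply: htot; by rewrite eq_sym.
  move/subset_leq_card; rewrite cardsU; lia.
lia.
Qed.

Definition isr (n : nat) (G : rel 'I_n) (m : nat) (t : TV G m) : bool :=
  if t is inr _ then true else false.

Lemma partB1 (n : nat) (G : rel 'I_n) (m : nat) (F0 : rel 'I_m) (K k : nat)
  (psi : 'I_m -> TV G m) (X Y : TV G m) :
  20 * 1000 <= m -> F0_good F0 -> 2 * m + 6 < 3 * k -> 6 * k < 5 * m ->
  (forall u v, F0 u v -> @Ti_arc n G m F0 K (psi u) (psi v)) ->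
  (forall v : 'I_m, v < k -> @Ti_arc n G m F0 K X (psi v) /\ @Ti_arc n G m F0 K (psi v) Y) ->
  (forall v : 'I_m, k <= v -> @Ti_arc n G m F0 K Y (psi v) /\ @Ti_arc n G m F0 K (psi v) X) ->
  exists e c, (forall v, inblk e c (psi v)) /\ inblk e c X /\ inblk e c Y.
Proof.
move=> hm [m0 ht hI hII hIII] hk1 hk2 hpsi hs hl.
have [hirr [htot hasym]] := tour_facts ht.
have Rirr := Ti_irr (G := G) K hirr.
have hdeg := degs ht hI.
set P := [set v | ~~ isr (psi v)].
have hP : ~~ ((2 * m - 13 * #|P|) ^ 2 <= 169 * m).
  apply/negP => h; have [c [c0 cu csub ccyc]] := hIII P h.
  pose f := fun v => if psi v is inl a then nat_of_ord a else 0.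
  have := @no_cycle_lt _ F0 f (mem P) c.
  rewrite ccyc c0 /= => H; suff : false by []; apply: H => //; last by apply/allP => x /csub.
  move=> u v; rewrite !inE /f /isr.
  have hh := hpsi u v; case: (psi u) hh => // a; case: (psi v) => // b hh _ _ /hh.
  exact: inl_arc.
have [hnum s0pos] := numeric hm hP.
set s0 := ceil_sqrt m in hnum s0pos.
pose kv := fun v => kap (psi v).
pose Qs t := [set v | isr (psi v) && (kv v < t)].
pose big := (6 * n * n + 1).
have kbound : forall v, kv v < big.+1.
  move=> v; rewrite /kv /big; case: (psi v) => // -[[e c] w] /=; rewrite /key.
  have := wgt_lt e; case: c => /=; lia.
have hPc : #|P| + #|~: P| = m by rewrite cardsC card_ord.
have hQbig : #|Qs big.+1| = m - #|P|.
  have -> : Qs big.+1 = ~: P by apply/setP => v; rewrite !inE negbK kbound andbT.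
  lia.
have hex : exists t, s0 <= #|Qs t.+1| by exists big; rewrite hQbig; lia.
case: (ex_minnP hex) => t hts hmin.
have hlow : #|Qs t| < s0.
  move: hts hmin; case: t => [|t'] hts hmin.
    have -> : Qs 0 = set0 by apply/setP=> v; rewrite !inE ltn0 andbF.
    by rewrite cards0.
  rewrite ltnNge; apply/negP => /hmin; by rewrite ltnn.
pose Hi := [set v | isr (psi v) && (t < kv v)].
have hhigh : #|Hi| < s0.
  rewrite ltnNge; apply/negP => hh.
  have [A1 [sA1 cA1]] := sub_card hts.
  have [A2 [sA2 cA2]] := sub_card hh.
  apply: hII; exists A1, A2; split => //.
  - rewrite disjoints_subset; apply/subsetP => x h1; rewrite inE; apply/negP => h2.
    have := subsetP sA1 _ h1; have := subsetP sA2 _ h2; rewrite !inE => /andP[_ k2] /andP[_ k1].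
    lia.
  - move=> a1 a2 h1 h2.
    have := subsetP sA1 _ h1; have := subsetP sA2 _ h2; rewrite !inE => /andP[r2 k2] /andP[r1 k1].
    have ne : a1 != a2 by apply/eqP => ee; subst a2; lia.
    case/orP: (htot _ _ ne) => // h21.
    exfalso; have := hpsi _ _ h21; rewrite /kv in k1 k2.
    move: r2 k2; case: (psi a2) => // -[[e2 c2] w2] _ k2.
    move: r1 k1; case: (psi a1) => // -[[e1 c1] w1] _ k1.
    case/key_arc => [[ee cc]|]; simpl in *; last by lia.
    by subst; lia.
pose Mid := [set v | isr (psi v) && (kv v == t)].
have hO : #|~: Mid| <= #|P| + #|Qs t| + #|Hi|.
  have : ~: Mid \subset (P :|: Qs t) :|: Hi.
    apply/subsetP => v; rewrite !inE; case: isr => //=.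
    by case: ltngtP.
  move/subset_leq_card; rewrite !cardsU; lia.
have hOb : 6 * #|~: Mid| < m by lia.
have hMc : #|Mid| + #|~: Mid| = m by rewrite cardsC card_ord.
have [v0 hv0] : {v0 | v0 \in Mid}.
  case: (set_0Vmem Mid) => [h0|//]; exfalso; move: hMc hOb; rewrite h0 cards0; lia.
have [e [c he]] : exists e c, forall v, v \in Mid -> exists w, psi v = inr (e, c, w).
  move: hv0; rewrite inE /kv; case: (psi v0) => // -[[e c] w0] /= /eqP ht0.
  exists e, c => v; rewrite inE /kv; case: (psi v) => // -[[e' c'] w] /= /eqP h.
  have [-> ->] := key_inj (etrans h (esym ht0)); by exists w.
have hout : forall u, exists v, F0 u v /\ v \in Mid.
  move=> u; have [d1 _] := hdeg u.
  case: (boolP ([set v | F0 u v] \subset ~: Mid)) => hsub.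
    by move/subset_leq_card: hsub; lia.
  case/subsetPn: hsub => v; rewrite inE => h1; rewrite inE negbK => h2; by exists v.
have hin : forall u, exists v, F0 v u /\ v \in Mid.
  move=> u; have [_ d1] := hdeg u.
  case: (boolP ([set v | F0 v u] \subset ~: Mid)) => hsub.
    by move/subset_leq_card: hsub; lia.
  case/subsetPn: hsub => v; rewrite inE => h1; rewrite inE negbK => h2; by exists v.
have [vs [hvs1 hvs2]] : exists v : 'I_m, v < k /\ v \in Mid.
  case: (boolP ([set v : 'I_m | v < k] \subset ~: Mid)) => hsub.
    by move/subset_leq_card: hsub; rewrite card_ltk; lia.
  case/subsetPn: hsub => v; rewrite inE => h1; rewrite inE negbK => h2; by exists v.
have [vl [hvl1 hvl2]] : exists v : 'I_m, k <= v /\ v \in Mid.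
  case: (boolP ([set v : 'I_m | k <= v] \subset ~: Mid)) => hsub.
    by move/subset_leq_card: hsub; rewrite card_gek; lia.
  case/subsetPn: hsub => v; rewrite inE => h1; rewrite inE negbK => h2; by exists v.
have [ws ews] := he _ hvs2; have [wl ewl] := he _ hvl2.
exists e, c; split; [|split].
- move=> u; have [v1 [f1 m1]] := hout u; have [v2 [f2 m2]] := hin u.
  have [w1 e1] := he _ m1; have [w2 e2] := he _ m2.
  apply: (@mid_block n G m F0 K e c w1 w2); [rewrite -e1 | rewrite -e2]; exact: hpsi.
- apply: (@mid_block n G m F0 K e c ws wl); [rewrite -ews; exact: (hs _ hvs1).1
    | rewrite -ewl; exact: (hl _ hvl1).2].
- apply: (@mid_block n G m F0 K e c wl ws); [rewrite -ewl; exact: (hl _ hvl1).1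
    | rewrite -ews; exact: (hs _ hvs1).2].
Qed.

Lemma Eext_rl (m : nat) (F0 : rel 'I_m) K r c w :
  Eext F0 K (inr r) (inl (c, w)) = if r == c then w < K else K <= w.
Proof. by rewrite /Eext /=; case: c; case: r; rewrite ?orbF. Qed.
Lemma Eext_lr (m : nat) (F0 : rel 'I_m) K r c w :
  Eext F0 K (inl (c, w)) (inr r) = if r == c then K <= w else w < K.
Proof. by rewrite /Eext /=; case: c; case: r; rewrite ?orbF. Qed.
Lemma Eext_rr (m : nat) (F0 : rel 'I_m) K r r' :
  Eext F0 K (inr r) (inr r') = ~~ r && r'.
Proof. by rewrite /Eext /=; case: r; case: r'. Qed.
Lemma Eext_ll (m : nat) (F0 : rel 'I_m) K c w c' w' :
  Eext F0 K (inl (c, w)) (inl (c', w')) = (c == c') && F0 w w' || ~~ c && c'.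
Proof. by rewrite /Eext /=; case: c; case: c'. Qed.

Lemma partB2 (m : nat) (F0 : rel 'I_m) (K k : nat) (g : 'I_m -> FdagV m)
  (ux uy : FdagV m) (c : bool) :
  0 < m -> condI F0 -> 2 * m + 6 < 3 * k -> 6 * k < 5 * m ->
  2 * m + 6 < 3 * K -> 6 * K < 5 * m -> injective g ->
  (forall v c' w, g v = inl (c', w) -> c' = c) ->
  (forall c' w, ux = inl (c', w) -> c' = c) ->
  (forall c' w, uy = inl (c', w) -> c' = c) ->
  (forall v : 'I_m, v < k -> Eext F0 K ux (g v) /\ Eext F0 K (g v) uy) ->
  (forall v : 'I_m, k <= v -> Eext F0 K uy (g v) /\ Eext F0 K (g v) ux) ->
  [/\ ux = inr c, uy = inr (~~ c), k = K & forall v, exists w, g v = inl (c, w)].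
Proof.
move=> m0 hI hk1 hk2 hK1 hK2 ginj hg hx hy hs hl.
have ginj' : {in [set v : 'I_m | v < k] &, injective g} by move=> ? ? _ _; apply: ginj.
have cS : #|[set v : 'I_m | v < k]| = k by rewrite card_ltk //; lia.
have card2 : forall (A : {set 'I_m}) c0,
    #|[set (inl (c0, w) : FdagV m) | w in A] :|: [set (inr false : FdagV m); inr true]| <= #|A| + 2.
  move=> A c0; rewrite cardsU card_imset; last by move=> a b [].
  rewrite cards2 (_ : (inr false != inr true :> FdagV m) = true) //.
  by apply: leq_trans (leq_subr _ _) _.
pose E (A : {set 'I_m}) := [set (inl (c, w) : FdagV m) | w in A] :|: [set (inr false : FdagV m); inr true].
have inE1 : forall (A : {set 'I_m}) w, w \in A -> (inl (c, w) : FdagV m) \in E A.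
  by move=> A w hw; apply/setUP; left; apply/imsetP; exists w.
have inE2 : forall (A : {set 'I_m}) r, (inr r : FdagV m) \in E A.
  by move=> A r; apply/setUP; right; rewrite !inE; case: r.
have Ecard : forall A, #|E A| <= #|A| + 2 by move=> A; apply: card2.
clearbody E.
have hux : forall cx x0, ux <> inl (cx, x0).
  move=> cx x0 ex; have ecx := hx _ _ ex; subst cx.
  have hsub : forall v, v \in [set v : 'I_m | v < k] -> g v \in E [set w | F0 x0 w].
    move=> v; rewrite inE => /hs [h _]; move: h; rewrite ex.
    case eg: (g v) => [[c' w]|r] h; last exact: inE2.
    have ec := hg _ _ _ eg; subst c'; apply: inE1; rewrite inE.
    by move: h; rewrite Eext_ll eqxx /=; case: (c) => /=; rewrite ?orbF.
  have := inj_card ginj' hsub; rewrite cS.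
  have e2 : #|E [set w | F0 x0 w]| <= #|[set w | F0 x0 w]| + 2 := Ecard _.
  have [h1 _] := hI x0; have h1' : 3 * #|[set w | F0 x0 w]| <= 2 * m := h1; lia.
have huy : forall cy y0, uy <> inl (cy, y0).
  move=> cy y0 ey; have ecy := hy _ _ ey; subst cy.
  have hsub : forall v, v \in [set v : 'I_m | v < k] -> g v \in E [set w | F0 w y0].
    move=> v; rewrite inE => /hs [_ h]; move: h; rewrite ey.
    case eg: (g v) => [[c' w]|r] h; last exact: inE2.
    have ec := hg _ _ _ eg; subst c'; apply: inE1; rewrite inE.
    by move: h; rewrite Eext_ll eqxx /=; case: (c) => /=; rewrite ?orbF.
  have := inj_card ginj' hsub; rewrite cS.
  have e2 : #|E [set w | F0 w y0]| <= #|[set w | F0 w y0]| + 2 := Ecard _.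
  have [_ h1] := hI y0; have h1' : 3 * #|[set w | F0 w y0]| <= 2 * m := h1; lia.
have [rx erx] : exists rx, ux = inr rx.
  by case: (ux) hux => [[cx x0]|r] h; [exfalso; apply: (h cx x0) | exists r].
have [ry ery] : exists ry, uy = inr ry.
  by case: (uy) huy => [[cx x0]|r] h; [exfalso; apply: (h cx x0) | exists r].
subst ux uy.
have k0 : 0 < k by lia.
have ery : ry = ~~ rx.
  have [h1 h2] := hs (Ordinal m0) k0.
  case: (eqVneq ry rx) => [e|]; last by by case: (rx); case: (ry).
  subst ry; exfalso; move: h1 h2.
  case: (g (Ordinal m0)) => [[c' w]|r]; rewrite ?Eext_rl ?Eext_lr ?Eext_rr.
    by case: (_ == _); lia.
  by case: (r); case: (rx).
subst ry.
have hsm : forall v : 'I_m, v < k -> exists w, g v = inl (c, w) /\ (if rx == c then w < K else K <= w).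
  move=> v /hs [h1 h2]; move: h1 h2; case eg: (g v) => [[c' w]|r].
    have ec := hg _ _ _ eg; subst c'; rewrite Eext_rl Eext_lr => h1 _; by exists w.
  by rewrite !Eext_rr; case: (r); case: (rx).
have hlg : forall v : 'I_m, k <= v -> exists w, g v = inl (c, w) /\ (if rx == c then K <= w else w < K).
  move=> v /hl [h1 h2]; move: h1 h2; case eg: (g v) => [[c' w]|r].
    have ec := hg _ _ _ eg; subst c'; rewrite Eext_rl Eext_lr => _ h2; by exists w.
  by rewrite !Eext_rr; case: (r); case: (rx).
have hall : forall v, exists w, g v = inl (c, w).
  move=> v; case: (ltnP v k) => hv; [have [w [-> _]] := hsm v hv | have [w [-> _]] := hlg v hv];
  by exists w.
pose h v := if g v is inl (_, w) then w else v.
have hh : forall v, g v = inl (c, h v) by move=> v; rewrite /h; have [w ->] := hall v.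
have hinj : injective h by move=> u v huv; apply: ginj; rewrite !hh huv.
have hinj' : forall (D : {set 'I_m}), {in D &, injective h} by move=> D u v _ _; apply: hinj.
have cL : #|[set v : 'I_m | k <= v]| = m - k by rewrite card_gek //; lia.
have cKs : #|[set v : 'I_m | v < K]| = K by rewrite card_ltk //; lia.
have cKl : #|[set v : 'I_m | K <= v]| = m - K by rewrite card_gek //; lia.
case: (eqVneq rx c) => erc; last first.
  exfalso.
  have : #|[set v : 'I_m | v < k]| <= #|[set v : 'I_m | K <= v]|.
    apply: (inj_card (hinj' _)) => v; rewrite !inE => /hsm [w [e1 e2]].
    by move: e2; rewrite (negbTE erc) (_ : h v = w) // /h e1.
  rewrite cS cKl; lia.
subst rx.
have e1 : #|[set v : 'I_m | v < k]| <= #|[set v : 'I_m | v < K]|.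
  apply: (inj_card (hinj' _)) => v; rewrite !inE => /hsm [w [f1 f2]].
  by move: f2; rewrite eqxx (_ : h v = w) // /h f1.
have e2 : #|[set v : 'I_m | k <= v]| <= #|[set v : 'I_m | K <= v]|.
  apply: (inj_card (hinj' _)) => v; rewrite !inE => /hlg [w [f1 f2]].
  by move: f2; rewrite eqxx (_ : h v = w) // /h f1.
split => //; move: e1 e2; rewrite cS cKs cL cKl; lia.
Qed.

Lemma partB (n : nat) (G : rel 'I_n) (m : nat) (F0 : rel 'I_m) (K k : nat)
  (psi : 'I_m -> TV G m) (X Y : TV G m) :
  20 * 1000 <= m -> F0_good F0 -> 2 * m + 6 < 3 * k -> 6 * k < 5 * m ->
  2 * m + 6 < 3 * K -> 6 * K < 5 * m ->
  (forall u v, F0 u v -> @Ti_arc n G m F0 K (psi u) (psi v)) ->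
  (forall v : 'I_m, v < k -> @Ti_arc n G m F0 K X (psi v) /\ @Ti_arc n G m F0 K (psi v) Y) ->
  (forall v : 'I_m, k <= v -> @Ti_arc n G m F0 K Y (psi v) /\ @Ti_arc n G m F0 K (psi v) X) ->
  exists e rx, [/\ X = embed e (inr rx), Y = embed e (inr (~~ rx)), k = K &
    forall v, exists w, psi v = inr (e, rx, w)].
Proof.
move=> hm hF hk1 hk2 hK1 hK2 hpsi hs hl.
have [e [c [hv [hX hY]]]] := partB1 hm hF hk1 hk2 hpsi hs hl.
case: hF => m0 ht hI _ _.
have [hirr [htot _]] := tour_facts ht.
have Rirr := Ti_irr (G := G) K hirr.
have psi_inj : injective psi.
  move=> u v huv; apply/eqP; apply/negPn/negP => ne.
  by case/orP: (htot _ _ ne) => /hpsi; rewrite huv (negbTE (Rirr _)).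
have dec : forall t : TV G m, inblk e c t -> t = embed e (decode e t) /\
    (forall c' w, decode e t = inl (c', w) -> c' = c).
  by move=> t; rewrite /inblk => -[u [-> hu]]; rewrite decodeK; split.
pose g v := decode e (psi v).
have hg : forall v, psi v = embed e (g v) by move=> v; exact: (dec _ (hv v)).1.
have [eX hX'] := dec _ hX; have [eY hY'] := dec _ hY.
have ginj : injective g by move=> u v huv; apply: psi_inj; rewrite !hg huv.
have hs' : forall v : 'I_m, v < k -> Eext F0 K (decode e X) (g v) /\ Eext F0 K (g v) (decode e Y).
  by move=> v /hs [h1 h2]; rewrite -!(embed_arc (G := G) _ _ e) -eX -eY -hg.
have hl' : forall v : 'I_m, k <= v -> Eext F0 K (decode e Y) (g v) /\ Eext F0 K (g v) (decode e X).
  by move=> v /hl [h1 h2]; rewrite -!(embed_arc (G := G) _ _ e) -eX -eY -hg.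
have [ex ey ekK hall] := @partB2 m F0 K k g (decode e X) (decode e Y) c m0 hI hk1 hk2 hK1 hK2 ginj
   (fun v => (dec _ (hv v)).2) hX' hY' hs' hl'.
exists e, c; split => //.
- by rewrite eX ex.
- by rewrite eY ey.
- by move=> v; have [w hw] := hall v; exists w; rewrite hg hw.
Qed.

Definition cle (s : nat) (r : 'I_s -> nat) (a b : CopyT r) := (a == b) || copy_lt a b.

Lemma copy_lt_key (s : nat) (r : 'I_s -> nat) (a b : CopyT r) :
  copy_lt a b = ((tag a : nat) < tag b) || (((tag a : nat) == tag b) && (val (tagged a) < val (tagged b))).
Proof. by []. Qed.

Lemma copy_eq (s : nat) (r : 'I_s -> nat) (a b : CopyT r) :
  (tag a : nat) = tag b -> val (tagged a) = val (tagged b) -> a = b.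
Proof.
case: a => i a; case: b => j b /= hij; have eij : i = j by apply: val_inj.
subst j => hab; congr existT; exact: val_inj.
Qed.

Lemma cle_trans (s : nat) (r : 'I_s -> nat) (a b c : CopyT r) :
  cle a b -> cle b c -> cle a c.
Proof.
rewrite /cle => /orP[/eqP->//|h1] /orP[/eqP<-|h2]; first by rewrite h1 orbT.
apply/orP; right; move: h1 h2; rewrite !copy_lt_key.
case/orP=> [h1|/andP[/eqP h1 h1']] /orP[h2|/andP[/eqP h2 h2']]; apply/orP.
- by left; lia.
- by left; lia.
- by left; lia.
- by right; apply/andP; split; [apply/eqP; lia | lia].
Qed.

Lemma cle_anti (s : nat) (r : 'I_s -> nat) (a b : CopyT r) :
  cle a b -> cle b a -> a = b.
Proof.
rewrite /cle => /orP[/eqP->//|h1] /orP[/eqP->//|h2].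
exfalso; move: h1 h2; rewrite !copy_lt_key.
case/orP=> [h1|/andP[/eqP h1 h1']] /orP[h2|/andP[/eqP h2 h2']]; lia.
Qed.

Lemma Tstar_cle (s : nat) (r : 'I_s -> nat) (n : nat) (G : rel 'I_n) (m : nat)
  (F0 : rel 'I_m) (k : 'I_s -> nat) (p q : TstarV r G m) :
  Tstar_arc F0 k p q -> cle p.1 q.1.
Proof. by rewrite /Tstar_arc /cle; case: eqP. Qed.

Lemma Tstar_same (s : nat) (r : 'I_s -> nat) (n : nat) (G : rel 'I_n) (m : nat)
  (F0 : rel 'I_m) (k : 'I_s -> nat) (C : CopyT r) (a b : TV G m) :
  Tstar_arc F0 k (C, a) (C, b) = Ti_arc F0 (k (tag C)) a b.
Proof. by rewrite /Tstar_arc /= eqxx. Qed.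

Lemma k_inj (m s : nat) (k : 'I_s -> nat) : k_good m k -> forall i j, k i = k j -> i = j.
Proof.
move=> [_ hk].
have dec : forall d (i j : 'I_s), (j : nat) = i + d.+1 -> k j < k i.
  elim=> [|d IH] i j hj; first by have := hk i j; rewrite hj addn1 => /(_ erefl); lia.

  have hj' : i + d.+1 < s by have := ltn_ord j; lia.
  have h1 := IH i (Ordinal hj') erefl.
  have h2 := hk (Ordinal hj') j; have : (j : nat) = (Ordinal hj').+1 by rewrite /=; lia.
  move/h2; lia.
move=> i j hij; apply: val_inj; case: (ltngtP i j) => // h; exfalso.
- have : (j : nat) = i + (j - i.+1).+1 by lia.
  move/dec; lia.
- have : (i : nat) = j + (i - j.+1).+1 by lia.
  move/dec; lia.
Qed.

Lemma Fdag_facts (m : nat) (F0 : rel 'I_m) (K : nat) (c : bool) (v : 'I_m) :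
  [/\ Fdag_arc F0 K (inr c) (inl (c, v)) = (v < K),
      Fdag_arc F0 K (inl (c, v)) (inr (~~ c)) = (v < K),
      Fdag_arc F0 K (inr (~~ c)) (inl (c, v)) = (K <= v) &
      Fdag_arc F0 K (inl (c, v)) (inr c) = (K <= v)].
Proof. by case: c. Qed.

Lemma homT (s : nat) (r : 'I_s -> nat) (n : nat) (G : rel 'I_n) (m : nat)
  (F0 : rel 'I_m) (k : 'I_s -> nat) (i : 'I_s) (phi : FdagV m -> TstarV r G m) x y :
  20 * 1000 <= m -> F0_good F0 -> k_good m k ->
  phi (root_z m) = x -> phi (root_w m) = y ->
  (forall u v, Fdag_arc F0 (k i) u v -> Tstar_arc F0 k (phi u) (phi v)) ->
  [/\ x.1 = y.1, tag x.1 = i & exists e rx, [/\ x.2 = embed e (inr rx),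
     y.2 = embed e (inr (~~ rx)) & forall u, phi u = (x.1, embed e (decode e (phi u).2))]].
Proof.
move=> hm hF hkg hz hw hphi.
have hF' := hF; case: hF' => m0 _ _ _ _.
have [hkb _] := hkg.
have [ki1 ki2] := hkb i.
pose X c := phi (inr c).
have hX : forall c, X c = if c then y else x by case; [rewrite /X -hw | rewrite /X -hz].
have hsm : forall c (v : 'I_m), v < k i ->
    Tstar_arc F0 k (X c) (phi (inl (c, v))) /\ Tstar_arc F0 k (phi (inl (c, v))) (X (~~ c)).
  move=> c v hv; have [f1 f2 _ _] := Fdag_facts F0 (k i) c v.
  by split; apply: hphi; rewrite ?f1 ?f2.
have hlg : forall c (v : 'I_m), k i <= v ->
    Tstar_arc F0 k (X (~~ c)) (phi (inl (c, v))) /\ Tstar_arc F0 k (phi (inl (c, v))) (X c).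
  move=> c v hv; have [_ _ f3 f4] := Fdag_facts F0 (k i) c v.
  by split; apply: hphi; rewrite ?f3 ?f4.
have v0k : 0 < k i by lia.
have v1m : m.-1 < m by lia.
have v1k : k i <= m.-1 by lia.
have exy : x.1 = y.1.
  have [a1 a2] := hsm false (Ordinal m0) v0k; have [b1 b2] := hlg false (Ordinal v1m) v1k.
  move: a1 a2 b1 b2; rewrite !hX /= => /Tstar_cle a1 /Tstar_cle a2 /Tstar_cle b1 /Tstar_cle b2.
  apply: cle_anti; [exact: cle_trans a1 a2 | exact: cle_trans b1 b2].
set C := x.1.
have hXC : forall c, (X c).1 = C by case; rewrite hX.
have hC : forall u, (phi u).1 = C.
  case=> [[c v]|c]; last exact: hXC.
  case: (ltnP v (k i)) => hv.
    have [/Tstar_cle a1 /Tstar_cle a2] := hsm c v hv.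
    by apply: cle_anti; [move: a2; rewrite hXC | move: a1; rewrite hXC].
  have [/Tstar_cle a1 /Tstar_cle a2] := hlg c v hv.
  by apply: cle_anti; [move: a2; rewrite hXC | move: a1; rewrite hXC].
have hpair : forall u, phi u = (C, (phi u).2) by move=> u; rewrite -(hC u); case: (phi u).
have harc : forall u v, Fdag_arc F0 (k i) u v -> Ti_arc F0 (k (tag C)) (phi u).2 (phi v).2.
  by move=> u v /hphi; rewrite (hpair u) (hpair v) Tstar_same.
have [kC1 kC2] := hkb (tag C).
have hB : forall c, exists e rx, [/\ (X c).2 = embed e (inr rx),
    (X (~~ c)).2 = embed e (inr (~~ rx)), k i = k (tag C) &
    forall v, exists w, (phi (inl (c, v))).2 = inr (e, rx, w)].
  move=> c; apply: (@partB n G m F0 (k (tag C)) (k i) (fun v => (phi (inl (c, v))).2) _ _ hm hF) => //.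
  - by move=> u v huv; apply: harc; rewrite /= eqxx.
  - move=> v hv; have [f1 f2 _ _] := Fdag_facts F0 (k i) c v.
    by split; apply: harc; rewrite ?f1 ?f2.
  - move=> v hv; have [_ _ f3 f4] := Fdag_facts F0 (k i) c v.
    by split; apply: harc; rewrite ?f3 ?f4.
have [e1 [rx1 [ex1 ey1 ekk hv1]]] := hB false.
have [e2 [rx2 [ey2 ex2 _ hv2]]] := hB true.
rewrite !hX /= in ex1 ey1 ex2 ey2.
have ee : e2 = e1 /\ rx2 = ~~ rx1.
  have hab1 : ((sval e1).1 < (sval e1).2)%N by case: (e1) => -[a b] /= /andP[].
  have hab2 : ((sval e2).1 < (sval e2).2)%N by case: (e2) => -[a b] /= /andP[].
  move: ex1 ey1 ex2 ey2; rewrite -/C.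
  case: (rx1); case: (rx2); case: (x.2) => // xa; case: (y.2) => // ya => /= -[h1] [h2] [h3] [h4];
  move: h1 h2 h3 h4 hab1 hab2; case: (e1) => -[a1 b1] hh1; case: (e2) => -[a2 b2] hh2 /=;
  move=> /(congr1 (@nat_of_ord n)) h1 /(congr1 (@nat_of_ord n)) h2 /(congr1 (@nat_of_ord n)) h3 /(congr1 (@nat_of_ord n)) h4 hab1 hab2;
  try (exfalso; lia); split => //;
  (have ea' : (a2 : nat) = a1 by lia); (have eb' : (b2 : nat) = b1 by lia);
  (have ea : a2 = a1 by apply: val_inj); (have eb : b2 = b1 by apply: val_inj);
  move: hh2; rewrite ea eb => hh2; congr exist; apply: bool_irrelevance.
case: ee => ee er; subst e2 rx2.
have etag : tag C = i by symmetry; apply: (k_inj hkg).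
have hemb : forall u, exists t, (phi u).2 = embed e1 t.
  case=> [[[] v]|[]].
  - by have [w ->] := hv2 v; exists (inl (~~ rx1, w)).
  - by have [w ->] := hv1 v; exists (inl (rx1, w)).
  - exists (inr (~~ rx1)); rewrite (_ : phi (inr true) = y) //; by move: ey1; case: (rx1).
  - exists (inr rx1); rewrite (_ : phi (inr false) = x) //; by move: ex1; case: (rx1).
split => //; exists e1, rx1; split => // u.
have [t ht] := hemb u; rewrite (hpair u) ht decodeK //.
Qed.

Definition swp (m : nat) (u : FdagV m) : FdagV m :=
  match u with inl (c, v) => inl (~~ c, v) | inr r => inr (~~ r) end.

Lemma swpK (m : nat) (u : FdagV m) : swp (swp u) = u.
Proof. by case: u => [[c v]|r] /=; rewrite negbK. Qed.

Lemma swp_arc (m : nat) (F0 : rel 'I_m) K (u v : FdagV m) :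
  Fdag_arc F0 K (swp u) (swp v) = Fdag_arc F0 K u v.
Proof. by case: u => [[[] w]|[]]; case: v => [[[] w']|[]]. Qed.

Lemma hom_swap_le (m : nat) (F0 : rel 'I_m) K (T : finType) (ET : rel T) (x y : T) :
  hom_xy (Fdag_arc F0 K) ET (root_z m) (root_w m) x y <=
  hom_xy (Fdag_arc F0 K) ET (root_z m) (root_w m) y x.
Proof.
rewrite /hom_xy; apply: (@inj_card _ _ _ _ (fun phi : {ffun FdagV m -> T} => [ffun u => phi (swp u)])).
  move=> p1 p2 _ _ h; apply/ffunP => u.
  by have := congr1 (fun f : {ffun FdagV m -> T} => f (swp u)) h; rewrite !ffunE swpK.
move=> phi; rewrite !inE => /and3P[hz hw /forallP hf]; rewrite !ffunE /=.
rewrite hz hw /=; apply/forallP => u; apply/forallP => v; apply/implyP => huv.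
rewrite !ffunE; have /forallP/(_ (swp v))/implyP := hf (swp u); apply.
by rewrite swp_arc.
Qed.

Lemma hom_swap (m : nat) (F0 : rel 'I_m) K (T : finType) (ET : rel T) (x y : T) :
  hom_xy (Fdag_arc F0 K) ET (root_z m) (root_w m) x y =
  hom_xy (Fdag_arc F0 K) ET (root_z m) (root_w m) y x.
Proof. by apply/eqP; rewrite eqn_leq !hom_swap_le. Qed.

Definition S0 (m : nat) (F0 : rel 'I_m) (K : nat) : {set {ffun FdagV m -> FdagV m}} :=
  [set g : {ffun FdagV m -> FdagV m} | [&& g (root_z m) == root_z m, g (root_w m) == root_w m &
     [forall u, forall v, Fdag_arc F0 K u v ==> Eext F0 K (g u) (g v)]]].

Lemma count_hom (s : nat) (r : 'I_s -> nat) (n : nat) (G : rel 'I_n) (m : nat)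
  (F0 : rel 'I_m) (k : 'I_s -> nat) (i : 'I_s) (x y : TstarV r G m) :
  20 * 1000 <= m -> F0_good F0 -> k_good m k -> in_TikG i x y ->
  hom_xy (Fdag_arc F0 (k i)) (Tstar_arc F0 k) (root_z m) (root_w m) x y = #|S0 F0 (k i)|.
Proof.
move=> hm hF hkg.
rewrite /in_TikG; case: x => C [a|[[ex cx] vx]]; case: y => C' [b|[[ey cy] vy]] /=;
  rewrite ?andbF // => /andP[/andP[/eqP eC /eqP eti] hG].
subst C'.
pose e : GedgeT G := exist _ (a, b) hG.
have hab : a < b by case/andP: (hG).
pose Gam (g : {ffun FdagV m -> FdagV m}) : {ffun FdagV m -> TstarV r G m} :=
  [ffun u => (C, embed e (g u))].
have Ginj : injective Gam.
  move=> g1 g2 h; apply/ffunP => u.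
  have := congr1 (fun f : {ffun FdagV m -> TstarV r G m} => f u) h; rewrite /Gam !ffunE.
  by case=> /embed_inj.
rewrite /hom_xy -(card_imset _ Ginj); apply: eq_card => phi; rewrite [in LHS]inE.
apply/idP/imsetP.
- move=> /and3P[/eqP hz /eqP hw /forallP hf].
  have hphi : forall u v, Fdag_arc F0 (k i) u v -> Tstar_arc F0 k (phi u) (phi v).
    by move=> u v; move: (hf u) => /forallP/(_ v)/implyP.
  have [_ _ [e' [rx [ex ey hall]]]] := homT hm hF hkg hz hw hphi.
  have ee : e' = e.
    move: ex ey; rewrite /=; case: (rx) => /= -[h1] [h2].
      by exfalso; move: hab; rewrite h1 h2 ltnNge; move: (e') => -[[a' b'] /= /andP[/ltnW ->]].
    move: h1 h2; case: (e') => -[a' b'] /= hh h1 h2; subst a' b'; rewrite /e; congr exist; exact: bool_irrelevance.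
  subst e'.
  exists [ffun u => decode e (phi u).2].
    rewrite inE /= !ffunE hz hw /= eqxx /= (negbTE (_ : b != a)); last by rewrite neq_ltn hab orbT.
    rewrite eqxx /=; apply/forallP => u; apply/forallP => v; apply/implyP => /hphi.
    by rewrite (hall u) (hall v) /= Tstar_same eti !ffunE embed_arc.
  by apply/ffunP => u; rewrite /Gam !ffunE /= -hall.
- move=> [g]; rewrite inE => /and3P[/eqP gz /eqP gw /forallP gf] ->.
  rewrite /Gam !ffunE gz gw /= !eqxx /=.
  apply/forallP => u; apply/forallP => v; apply/implyP => huv; rewrite !ffunE Tstar_same eti embed_arc.
  by move: (gf u) => /forallP/(_ v)/implyP; apply.
Qed.

Unset Implicit Arguments. Set Strict Implicit. Set Printing Implicit Defensive.


Theorem lemma4p8 (s : nat) (hs : (0 < s)%N) :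
  exists M : nat, forall m : nat, (M <= m)%N ->
  forall F0 : rel 'I_m, F0_good F0 ->
  forall k : 'I_s -> nat, k_good m k ->
  forall (n : nat) (G : rel 'I_n), simple_graph G ->
  forall r : 'I_s -> nat, (forall i, (0 < r i)%N) ->
  forall i : 'I_s, exists a : rat, (0 < a)%R /\
    forall x y : TstarV r G m,
      t_xy (Fdag_arc F0 (k i)) (Tstar_arc F0 k) (root_z m) (root_w m) x y
      = (if in_TikG i x y || in_TikG i y x then a else 0%R).
Proof.
exists (20 * 1000) => m hm F0 hF k hkg n G hG r hr i.
case: (posnP #|TstarV r G m|) => hN.
  exists 1%R; split => // x; exfalso.
  have : 0 < #|TstarV r G m| by apply/card_gt0P; exists x.
  by rewrite hN.
exists ((#|S0 F0 (k i)|)%:R / (#|TstarV r G m| ^ (#|FdagV m| - 2))%:R)%R; split.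
  have hS : 0 < #|S0 F0 (k i)|.
    apply/card_gt0P; exists [ffun u => u]; rewrite inE !ffunE !eqxx /=.
    apply/forallP => u; apply/forallP => v; apply/implyP => huv; rewrite !ffunE /Eext huv //.
  by rewrite Num.Theory.divr_gt0 // Num.Theory.ltr0n // expn_gt0 hN.
move=> x y; rewrite /t_xy; case: ifP => h.
  case/orP: h => h; first by rewrite (count_hom hm hF hkg h).
  by rewrite hom_swap (count_hom hm hF hkg h).
suff -> : hom_xy (Fdag_arc F0 (k i)) (Tstar_arc F0 k) (root_z m) (root_w m) x y = 0%N.
  by rewrite GRing.mul0r.
apply/eqP; rewrite cards_eq0; apply/eqP/setP => phi; rewrite inE in_set0.
apply/negP => /and3P[/eqP hz /eqP hw /forallP hf].
have hphi : forall u v, Fdag_arc F0 (k i) u v -> Tstar_arc F0 k (phi u) (phi v).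
  by move=> u v; move: (hf u) => /forallP/(_ v)/implyP.
have [e1 e2 [e [rx [ex ey _]]]] := homT hm hF hkg hz hw hphi.
move: h; rewrite /in_TikG ex ey e2 -e1 e2 eqxx /=.
case: (rx) => /=; case: (e) => -[a b] /= hab; by rewrite eqxx hab ?orbT.
Qed.
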